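(* Let $M\in\mathrm{M}_n(\mathbb{K})$ be a cyclic matrix with minimal polynomial $f=f_1^{m_1}\cdots f_s^{m_s}$, where $f_1,\dots,f_s\in\mathbb{K}[x]$ are pairwise distinct monic irreducible polynomials and $m_i\ge1$. Let $g\in\mathbb{L}[x]$ be a monic divisor of $f$, written $g=g_1\cdots g_s$ with $g_i\mid f_i^{m_i}$ in $\mathbb{L}[x]$. For each $i$ let $\ell_i=0$ if $g_i=1$, and $\ell_i=\min\{\ell\in\{1,\dots,m_i\} : g_i\mid f_i^{\ell}\}$ if $g_i\neq1$. Let $d=n-\sum_i\ell_i\deg f_i$ and let $v\in\mathbb{K}^n$ be a cyclic vector for $M$. Then: (1) $g\,\mathbb{L}[x]\cap\mathbb{K}[x]=\big(\prod_{i=1}^sf_i^{\ell_i}\big)\mathbb{K}[x]$; (2) the map $Q\in\mathbb{K}[x]_{<d}\mapsto v\,\big(\prod_i f_i^{\ell_i}\big)(M)^tQ(M)^t$ is a $\mathbb{K}$-linear isomorphism onto $\mathcal{C}_g\cap\mathbb{K}^n$; in particular $\dim_{\mathbb{K}}(\mathcal{C}_g\cap\mathbb{K}^n)=\sum_{i=1}^s(m_i-\ell_i)\deg f_i$; (3) if $\mathcal{C}_g\neq\{0\}$, then $M_1(\mathcal{C}_g)=1$ if and only if there exists $i$ with $\ell_i\le m_i-1$, i.e. with $g_i\mid f_i^{m_i-1}$.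
   Context: Let $\mathbb{L}/\mathbb{K}$ be a field extension of finite degree $m\ge n$. Vectors are row vectors; $\mathbb{F}[x]_{<d}$ denotes polynomials of degree $<d$. For $c=(c_1,\dots,c_n)\in\mathbb{L}^n$, $\mathrm{wt}_R(c)=\dim_{\mathbb{K}}\mathrm{Span}_{\mathbb{K}}(c_1,\dots,c_n)$, and for a nonzero linear code $\mathcal{C}\subseteq\mathbb{L}^n$, $M_1(\mathcal{C})=\min\{\mathrm{wt}_R(c):0\neq c\in\mathcal{C}\}$ (the first generalized rank weight). A matrix $M\in\mathrm{M}_n(\mathbb{K})$ is cyclic if there is $v\in\mathbb{K}^n$ (a cyclic vector) with $(v,vM^t,\dots,v(M^t)^{n-1})$ a basis; equivalently its minimal polynomial $f$ has degree $n$. For a monic divisor $g$ of $f$ in $\mathbb{L}[x]$, $\mathcal{C}_g=\{v\,g(M)^tP(M)^t : P\in\mathbb{L}[x]\}\subseteq\mathbb{L}^n$ (independent of the cyclic vector $v\in\mathbb{K}^n$, of dimension $n-\deg g$); every $\mathbb{L}$-subspace of $\mathbb{L}^n$ stable under $c\mapsto cM^t$ (an $M$-cyclic code) is $\mathcal{C}_g$ for a unique $g$, called its generator polynomial. *)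

(* Defs.v *)
From HB Require Import structures.
From mathcomp Require Import all_boot all_order all_algebra all_field.
Set Implicit Arguments. Unset Strict Implicit. Unset Printing Implicit Defensive.
Import GRing.Theory.
Local Open Scope ring_scope.

Section Defs.
Variables (K : fieldType) (L : fieldExtType K).

Definition lift_mx p q (A : 'M[K]_(p, q)) : 'M[L]_(p, q) := map_mx (in_alg L) A.
Definition lift_poly (p : {poly K}) : {poly L} := map_poly (in_alg L) p.

Definition krylov_mx n (M : 'M[K]_n) (v : 'rV[K]_n) : 'M[K]_n :=
  \matrix_(k < n) (v *m (M^T) ^+ k).
Definition cyclic_vector n (M : 'M[K]_n) (v : 'rV[K]_n) : bool :=
  row_free (krylov_mx M v) && row_full (krylov_mx M v).

Definition cyclic_code n (M : 'M[K]_n.+1) (v : 'rV[K]_n.+1) (g : {poly L})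
  : 'rV[L]_n.+1 -> Prop :=
  fun c => exists P : {poly L},
    c = lift_mx v *m (horner_mx (lift_mx M) g)^T *m (horner_mx (lift_mx M) P)^T.

Definition rank_weight n (c : 'rV[L]_n) : nat :=
  \dim (<< [seq c ord0 j | j <- enum 'I_n] >>)%VS.

Definition is_M1 n (C : 'rV[L]_n -> Prop) (k : nat) : Prop :=
  (exists c, [/\ C c, c != 0 & rank_weight c = k]) /\
  (forall c, C c -> c != 0 -> (k <= rank_weight c)%N).

Definition is_ell (gi : {poly L}) (fi : {poly K}) (mi l : nat) : Prop :=
  if gi == 1 then l = 0%N
  else [/\ (1 <= l <= mi)%N, gi %| lift_poly (fi ^+ l)
         & forall l', (1 <= l' < l)%N -> ~~ (gi %| lift_poly (fi ^+ l'))].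
End Defs.

(* Main.v *)
Require Import Defs.
From HB Require Import structures.
From mathcomp Require Import all_boot all_order all_algebra all_field.
From mathcomp Require Import zify.
Import GRing.Theory.
Local Open Scope ring_scope.
Set Implicit Arguments. Unset Strict Implicit.

Section Gen.
Variables (R : fieldType) (n : nat) (A : 'M[R]_n.+1) (u : 'rV[R]_n.+1).

Definition pv (p : {poly R}) := u *m (horner_mx A p)^T.

Lemma trmxX k : (A ^+ k)^T = (A^T) ^+ k.
Proof.
elim: k => [|k IH]; first by rewrite !expr0 trmx1.
by rewrite exprS exprSr -IH -!mulmxE trmx_mul.
Qed.

Lemma pv0 : pv 0 = 0.
Proof. by rewrite /pv rmorph0 trmx0 mulmx0. Qed.

Lemma pvD (p q : {poly R}) : pv (p + q) = pv p + pv q.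
Proof. by rewrite /pv rmorphD linearD mulmxDr. Qed.

Lemma pvZ a (p : {poly R}) : pv (a *: p) = a *: pv p.
Proof. by rewrite /pv linearZ /= linearZ /= scalemxAr. Qed.

Lemma pvN (p : {poly R}) : pv (- p) = - pv p.
Proof. by rewrite -scaleN1r pvZ scaleN1r. Qed.

Lemma pvB (p q : {poly R}) : pv (p - q) = pv p - pv q.
Proof. by rewrite pvD pvN. Qed.

Lemma pv_lsum (I : Type) (r : seq I) (c : I -> R) (q : I -> {poly R}) :
  pv (\sum_(i <- r) c i *: q i) = \sum_(i <- r) c i *: pv (q i).
Proof.
elim: r => [|x r IH]; first by rewrite !big_nil pv0.
by rewrite !big_cons pvD pvZ IH.
Qed.

Lemma pvM (p q : {poly R}) : pv (p * q) = pv p *m (horner_mx A q)^T.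
Proof. by rewrite /pv mulrC rmorphM /= trmx_mul mulmxA. Qed.

Lemma poly_trunc (p : {poly R}) N : (size p <= N)%N -> p = \poly_(i < N) p`_i.
Proof.
move=> H; apply/polyP => k; rewrite coef_poly.
case: ltnP => // Hk; rewrite nth_default //; exact: leq_trans H Hk.
Qed.

Lemma pvX k : pv 'X^k = u *m (A^T) ^+ k.
Proof. by rewrite /pv rmorphXn /= horner_mx_X trmxX. Qed.

Lemma pv_krylov (p : {poly R}) : (size p <= n.+1)%N ->
  pv p = (\row_(k < n.+1) p`_k) *m krylov_mx A u.
Proof.
move=> H; rewrite {1}(poly_trunc H) poly_def pv_lsum mulmx_sum_row.
by apply: eq_bigr => i _; rewrite mxE rowK pvX.
Qed.

Hypothesis cyc : cyclic_vector A u.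

Lemma pv_eq0 (p : {poly R}) : (size p <= n.+1)%N -> pv p = 0 -> p = 0.
Proof.
move=> H; rewrite pv_krylov // => H0.
have: (\row_(k < n.+1) p`_k) = 0.
  apply: (row_free_inj (m := 1%N) (andP cyc).1); by rewrite H0 mul0mx.
move/rowP => E; apply/polyP => k; rewrite coef0.
case: (ltnP k n.+1) => Hk.
  by have := E (Ordinal Hk); rewrite !mxE.
by rewrite nth_default //; exact: leq_trans H Hk.
Qed.

Lemma size_mp : size (mxminpoly A) = n.+2.
Proof.
apply/eqP; rewrite eqn_leq; apply/andP; split.
  rewrite -(size_char_poly A).
  exact: dvdp_leq (monic_neq0 (char_poly_monic A)) (mxminpoly_dvd_char A).
rewrite ltnNge; apply/negP => H.
have := pv_eq0 H; rewrite /pv mx_root_minpoly trmx0 mulmx0 => /(_ erefl) H0.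
by have := mxminpoly_monic A; rewrite H0 monicE lead_coef0 eq_sym oner_eq0.
Qed.

Lemma pv_eq0_dvd (p : {poly R}) : pv p = 0 <-> mxminpoly A %| p.
Proof.
split; last by move/mxminpoly_minP => H; rewrite /pv H trmx0 mulmx0.
move=> H.
have mp0 : mxminpoly A != 0 by rewrite monic_neq0 // mxminpoly_monic.
move: H; rewrite {1}(divp_eq p (mxminpoly A)) pvD.
have -> : pv (p %/ mxminpoly A * mxminpoly A) = 0.
  by rewrite /pv rmorphM /= mx_root_minpoly mulr0 trmx0 mulmx0.
rewrite add0r => /pv_eq0 H.
have Hs : (size (p %% mxminpoly A)%R <= n.+1)%N.
  by rewrite -ltnS -size_mp ltn_modp.
by apply/modp_eq0P; exact: H Hs.
Qed.

Lemma pv_surj (w : 'rV[R]_n.+1) : exists p : {poly R}, (size p <= n.+1)%N /\ w = pv p.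
Proof.
have : (w <= krylov_mx A u)%MS by apply: submx_full; exact: (andP cyc).2.
case/submxP => D ->.
exists (\poly_(k < n.+1) D 0 (inord k)); split; first exact: size_poly.
rewrite pv_krylov ?size_poly //; congr (_ *m _).
by apply/rowP => k; rewrite !mxE coef_poly ltn_ord inord_val.
Qed.

End Gen.
Lemma irr_coprime (R : fieldType) (f q : {poly R}) :
  irreducible_poly f -> ~~ (f %| q) -> coprimep f q.
Proof.
move=> hf nd; rewrite coprimep_def; apply/negPn/negP => H.
have E := hf.2 _ H (dvdp_gcdl f q).
by move/negP: nd; apply; rewrite -(eqp_dvdl q E) dvdp_gcdr.
Qed.

Lemma irr_coprime2 (R : fieldType) (f1 f2 : {poly R}) :
  f1 \is monic -> f2 \is monic -> irreducible_poly f1 -> irreducible_poly f2 ->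
  f1 != f2 -> coprimep f1 f2.
Proof.
move=> m1 m2 i1 i2 ne; apply: irr_coprime => //; apply/negP => H.
have s1 : size f1 != 1 by have := i1.1; case: (size f1) => [|[|k]].
have := i2.2 _ s1 H; rewrite eqp_monic // => /eqP E.
by rewrite E eqxx in ne.
Qed.

Lemma prod_dvd (R : idomainType) (I : eqType) (r : seq I) (a : I -> {poly R}) p :
  uniq r -> (forall i j, i \in r -> j \in r -> i != j -> coprimep (a i) (a j)) ->
  (forall i, i \in r -> a i %| p) -> \prod_(i <- r) a i %| p.
Proof.
elim: r => [|x r IH]; first by rewrite big_nil dvd1p.
rewrite /= => /andP [xr ur] hc hd; rewrite big_cons Gauss_dvdp.
  rewrite hd ?mem_head //= IH // => [i j ir jr|i ir].
    by apply: hc; rewrite in_cons ?ir ?jr orbT.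
  by apply: hd; rewrite in_cons ir orbT.
rewrite big_seq; apply: (big_ind (fun q => coprimep (a x) q)).
- exact: coprimep1.
- by move=> q1 q2 h1 h2; rewrite coprimepMr h1 h2.
move=> i ir; apply: hc; rewrite ?mem_head ?in_cons ?ir ?orbT //.
by apply/negP => /eqP E; rewrite E ir in xr.
Qed.

Lemma deg_prod (R : idomainType) (I : Type) (r : seq I) (h : I -> {poly R}) :
  (forall i, h i \is monic) ->
  \prod_(i <- r) h i \is monic /\
  (size (\prod_(i <- r) h i)).-1 = (\sum_(i <- r) (size (h i)).-1)%N.
Proof.
move=> hm.
apply: (big_ind2 (fun (a : {poly R}) (b : nat) => a \is monic /\ (size a).-1 = b)).
- by rewrite monic1 size_poly1.
- move=> a1 b1 a2 b2 [ma1 <-] [ma2 <-]; split; first by rewrite monicMl.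
  rewrite size_Mmonic ?monic_neq0 //.
  have := size_poly_gt0 a1; have := size_poly_gt0 a2.
  rewrite !monic_neq0 //; lia.
by move=> i _; split.
Qed.
Section Lift.
Variables (K : fieldType) (L : fieldExtType K).

Lemma lift_pv n (M : 'M[K]_n.+1) (v : 'rV[K]_n.+1) (p : {poly K}) :
  lift_mx L (pv M v p) = pv (lift_mx L M) (lift_mx L v) (lift_poly L p).
Proof. by rewrite /pv /lift_mx /lift_poly map_mxM -map_horner_mx map_trmx. Qed.

Lemma lift_cyc n (M : 'M[K]_n.+1) (v : 'rV[K]_n.+1) :
  cyclic_vector M v -> cyclic_vector (lift_mx L M) (lift_mx L v).
Proof.
have E : krylov_mx (lift_mx L M) (lift_mx L v) = lift_mx L (krylov_mx M v).
  apply/row_matrixP => i; rewrite rowK /lift_mx -map_row rowK -!pvX.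
  by have := lift_pv M v 'X^i; rewrite /lift_mx /lift_poly map_polyXn => ->.
by rewrite /cyclic_vector E /lift_mx row_free_map row_full_map.
Qed.

Lemma lift_inj m n (w : 'M[K]_(m, n)) : lift_mx L w = 0 -> w = 0.
Proof. by move=> H; apply/eqP; rewrite -(map_mx_eq0 (in_alg L)) -/(lift_mx L w) H. Qed.

Lemma key_ell (f : {poly K}) (gs : {poly L}) m l (p : {poly K}) :
  irreducible_poly f -> gs \is monic -> gs %| lift_poly L (f ^+ m) ->
  is_ell gs f m l -> gs %| lift_poly L p -> f ^+ l %| p.
Proof.
move=> hf hgm hgd hell hgp.
suff : forall j, (j <= l)%N -> f ^+ j %| p by apply.
elim=> [|j IH] hj; first by rewrite expr0 dvd1p.
have {IH} IH := IH (ltnW hj).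
case: (boolP (f ^+ j.+1 %| p)) => // nd; exfalso.
set q := p %/ f ^+ j.
have Ep : p = q * f ^+ j by rewrite divpK.
have nq : ~~ (f %| q).
  apply/negP => H; move/negP: nd; apply.
  rewrite Ep exprSr [q * _]mulrC; exact: dvdp_mul (dvdpp _) H.
have cq : coprimep (f ^+ m) q by apply: coprimep_expl; exact: irr_coprime.
have cL : coprimep gs (lift_poly L q).
  rewrite coprimep_sym; apply: (coprimep_dvdl hgd).
  by rewrite coprimep_sym /lift_poly coprimep_map.
have hgj : gs %| lift_poly L (f ^+ j).
  by rewrite -(Gauss_dvdpr _ cL) /lift_poly -rmorphM -Ep.
move: hell; rewrite /is_ell; case: ifP => [_ Hl|hg1 [_ _ H]].
  by rewrite Hl in hj.
case: j hj IH nd hgj {Ep q nq cq cL} => [|j] hj _ _ hgj.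
  move: hgj; rewrite expr0 /lift_poly rmorph1 dvdp1 => /size_poly1P [c c0 Ec].
  move: hgm hg1; rewrite Ec monicE lead_coefC => /eqP ->.
  by rewrite eqxx.
by move/negP: (H j.+1 hj).
Qed.
End Lift.
Unset Implicit Arguments.
Theorem theorem4 (K : fieldType) (L : fieldExtType K) (n : nat)
    (M : 'M[K]_n.+1) (v : 'rV[K]_n.+1) (s : nat)
    (f : 'I_s -> {poly K}) (m : 'I_s -> nat)
    (g : {poly L}) (gs : 'I_s -> {poly L}) (l : 'I_s -> nat) :
  (n.+1 <= \dim {:L})%N ->
  cyclic_vector M v ->
  mxminpoly M = \prod_(i < s) f i ^+ m i ->
  (forall i, f i \is monic) ->
  (forall i, irreducible_poly (f i)) ->
  injective f ->
  (forall i, 1 <= m i)%N ->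
  g \is monic ->
  g = \prod_(i < s) gs i ->
  (forall i, gs i \is monic) ->
  (forall i, gs i %| lift_poly L (f i ^+ m i)) ->
  (forall i, is_ell (gs i) (f i) (m i) (l i)) ->
  let F := \prod_(i < s) f i ^+ l i in
  let d := (n.+1 - \sum_(i < s) l i * (size (f i)).-1)%N in
  let phi := fun Q : {poly K} => v *m (horner_mx M F)^T *m (horner_mx M Q)^T in
  let C := cyclic_code M v g in
  [/\ (* (1) *)
      (forall p : {poly K}, g %| lift_poly L p <-> F %| p),
      (* (2) phi : K[x]_{<d} -> C_g \cap K^n is a K-linear bijection *)
      [/\ (forall (a : K) (Q1 Q2 : {poly K}), phi (a *: Q1 + Q2) = a *: phi Q1 + phi Q2),
          (forall Q1 Q2 : {poly K}, (size Q1 <= d)%N -> (size Q2 <= d)%N ->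
              phi Q1 = phi Q2 -> Q1 = Q2)
        & (forall w : 'rV[K]_n.+1,
              C (lift_mx L w) <-> exists2 Q : {poly K}, (size Q <= d)%N & w = phi Q)],
      (* (2) dimension of C_g \cap K^n *)
      (exists U : {vspace 'rV[K]_n.+1},
          (forall w, w \in U <-> C (lift_mx L w)) /\
          \dim U = (\sum_(i < s) (m i - l i) * (size (f i)).-1)%N)
    & (* (3) *)
      (exists c, C c /\ c != 0) ->
      (is_M1 C 1 <-> exists i, (l i <= m i - 1)%N)].
Proof.
move=> hdim hcyc hmp hmon hirr hinj hm hgmon hg hgsmon hgsdvd hell F d phi C.
have hlm : forall i, (l i <= m i)%N.
  by move=> i; move: (hell i); rewrite /is_ell; case: ifP => [_ ->//|_ [/andP[_ ->]]].
have hfs : forall i, (1 < size (f i))%N := fun i => (hirr i).1.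
have hcop : forall i j, i != j -> forall a b, coprimep (f i ^+ a) (f j ^+ b).
  move=> i j ij a b; apply: coprimep_expl; rewrite coprimep_sym.
  apply: coprimep_expl; rewrite coprimep_sym.
  apply: irr_coprime2 => //; apply/negP => /eqP /hinj E.
  by rewrite E eqxx in ij.
have hFm : F \is monic by apply: monic_prod => i _; exact: monic_exp.
have hdegF : (size F).-1 = (\sum_(i < s) l i * (size (f i)).-1)%N.
  have [_ ->] := deg_prod (index_enum 'I_s) (fun i => monic_exp (l i) (hmon i)).
  by apply: eq_bigr => i _; rewrite size_exp mulnC.
have hdegmp : n.+1 = (\sum_(i < s) m i * (size (f i)).-1)%N.
  have := size_mp hcyc; rewrite hmp => E.
  have [_] := deg_prod (index_enum 'I_s) (fun i => monic_exp (m i) (hmon i)).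
  rewrite E /= => ->.
  by apply: eq_bigr => i _; rewrite size_exp mulnC.
pose D := (\sum_(i < s) l i * (size (f i)).-1)%N.
have {}hdegF : (size F).-1 = D := hdegF.
have hdD : d = (n.+1 - D)%N := erefl.
have hD : (D <= n.+1)%N.
  by rewrite hdegmp; apply: leq_sum => i _; rewrite leq_mul2r hlm orbT.
have hd : d = (\sum_(i < s) (m i - l i) * (size (f i)).-1)%N.
  rewrite hdD /D {1}hdegmp -sumnB; last by move=> i _; rewrite leq_mul2r hlm orbT.
  by apply: eq_bigr => i _; rewrite mulnBl.
have sF : size F = D.+1.
  by rewrite -hdegF prednK // size_poly_gt0 monic_neq0.
have hgsl : forall i, gs i %| lift_poly L (f i ^+ l i).
  move=> i; move: (hell i); rewrite /is_ell.
  case: ifP => [/eqP -> _|_ [_ ->]] //.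
  exact: dvd1p.
have P1 : forall p : {poly K}, g %| lift_poly L p <-> F %| p.
  move=> p; split => H.
  - apply: prod_dvd; first exact: index_enum_uniq.
      by move=> i j _ _ ij; exact: hcop.
    move=> i _; apply: (key_ell (hirr i) (hgsmon i) (hgsdvd i) (hell i)).
    apply: dvdp_trans H; rewrite hg (bigD1 i) //=; exact: dvdp_mulIl.
  - apply: (@dvdp_trans _ (lift_poly L F)); last by rewrite /lift_poly dvdp_map.
    rewrite hg /F /lift_poly rmorph_prod.
    apply: (big_ind2 (fun a b => a %| b)).
    - exact: dvd1p.
    - by move=> *; exact: dvdp_mul.
    by move=> i _; have := hgsl i.

have phiE : forall Q, phi Q = pv M v (F * Q) by move=> Q; rewrite pvM.
have Hlin : forall (a : K) (Q1 Q2 : {poly K}),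
    phi (a *: Q1 + Q2) = a *: phi Q1 + phi Q2.
  by move=> a Q1 Q2; rewrite !phiE mulrDr -scalerAr pvD pvZ.
have phi0 : phi 0 = 0 by rewrite phiE mulr0 pv0.
have hsizeFQ : forall Q : {poly K}, (size Q <= d)%N -> (size (F * Q)%R <= n.+1)%N.
  move=> Q hQ; apply: leq_trans (size_mul_leq _ _) _.
  rewrite sF; move: hQ; rewrite hdD; lia.
have Hinj : forall Q1 Q2 : {poly K}, (size Q1 <= d)%N -> (size Q2 <= d)%N ->
    phi Q1 = phi Q2 -> Q1 = Q2.
  move=> Q1 Q2 h1 h2; rewrite !phiE => E; apply/eqP; rewrite -subr_eq0; apply/eqP.
  have : F * (Q1 - Q2) = 0.
    apply: (pv_eq0 hcyc); last by rewrite mulrBr pvB E subrr.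
    apply: hsizeFQ; apply: leq_trans (size_add _ _) _.
    by rewrite size_opp geq_max h1 h2.
  by move/eqP; rewrite mulf_eq0 (negbTE (monic_neq0 hFm)) /= => /eqP.
have hgmp : g %| lift_poly L (mxminpoly M).
  apply/P1; rewrite hmp /F.
  apply: (big_ind2 (fun a b => a %| b)).
  - exact: dvd1p.
  - by move=> *; exact: dvdp_mul.
  by move=> i _; apply: dvdp_exp2l.
have Hs : forall w : 'rV[K]_n.+1,
    C (lift_mx L w) <-> exists2 Q : {poly K}, (size Q <= d)%N & w = phi Q.
  move=> w; split.
  - case=> P HP; rewrite -pvM in HP.
    have [R [hR hw]] := pv_surj hcyc w.
    rewrite hw lift_pv in HP.
    have Hdv : mxminpoly (lift_mx L M) %| lift_poly L R - g * P.
      by apply/(pv_eq0_dvd (lift_cyc L hcyc)); rewrite pvB HP subrr.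
    move: Hdv; rewrite /lift_mx mxminpoly_map => Hdv.
    have hgR : g %| lift_poly L R.
      rewrite -(subrK (g * P) (lift_poly L R)); apply: dvdp_add.
        exact: dvdp_trans hgmp Hdv.
      exact: dvdp_mulIl.
    have hFR := (P1 R).1 hgR.
    exists (R %/ F); last by rewrite hw phiE mulrC divpK.
    have [->|nz] := eqVneq (R %/ F) 0; first by rewrite size_poly0.
    have := hR; rewrite -{1}(divpK hFR) size_Mmonic // sF hdD; lia.
  - case=> Q hQ ->; exists (lift_poly L F %/ g * lift_poly L Q).
    rewrite -pvM mulrA divpKC; last exact/P1.
    by rewrite /lift_poly -rmorphM -/(lift_poly L _) -lift_pv phiE.
have hXsz : forall c : 'I_d -> K, (size (\sum_(i < d) c i *: 'X^i)%R <= d)%N.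
  move=> c; apply/leq_sizeP => j hj; rewrite coef_sumMXn big1 // => i /eqP Eij.
  by have := ltn_ord i; lia.
have hXcoef : forall (c : 'I_d -> K) (j : 'I_d), (\sum_(i < d) c i *: 'X^i)`_j = c j.
  by move=> c j; rewrite coef_sumMXn (big_pred1 j) // => i /=; exact: val_eqE.
set X := [tuple phi 'X^i | i < d].
have hXi : forall i : 'I_d, X`_i = phi 'X^i by move=> i; rewrite nth_mktuple.
have hsum : forall c : 'I_d -> K,
    \sum_(i < d) c i *: X`_i = phi (\sum_(i < d) c i *: 'X^i).
  move=> c; rewrite phiE mulr_sumr.
  rewrite (eq_bigr (fun i => c i *: (F * 'X^i))) => [|i _]; last by rewrite scalerAr.
  by rewrite pv_lsum; apply: eq_bigr => i _; rewrite hXi phiE.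
have hfree : free X.
  apply/freeP => c Hc i.
  have := hsum c; rewrite Hc -phi0 => /esym /Hinj H0.
  have H1 : (size (0 : {poly K})%R <= d)%N by rewrite size_poly0.
  move: (H0 (hXsz c) H1) => /(congr1 (fun p : {poly K} => p`_i)).
  by rewrite hXcoef coef0.
have Hdim : exists U : {vspace 'rV[K]_n.+1},
    (forall w, w \in U <-> C (lift_mx L w)) /\
    \dim U = (\sum_(i < s) (m i - l i) * (size (f i)).-1)%N.
  exists <<X>>%VS; split.
    move=> w; rewrite Hs; split => H.
      exists (\sum_(i < d) coord X i w *: 'X^i); first exact: hXsz.
      by rewrite -hsum; exact: coord_span H.
    case: H => Q hQ ->.
    rewrite (poly_trunc hQ) poly_def -(hsum (fun i => Q`_i)).
    apply: memv_suml => i _; apply: memvZ; apply: memv_span.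
    by apply: mem_nth; rewrite size_tuple.
  by move: hfree; rewrite /free => /eqP ->; rewrite size_tuple hd.
split; [exact: P1 | by split | exact: Hdim | ].
move=> _.
have row_nz : forall c : 'rV[L]_n.+1, c != 0 -> exists j, c ord0 j != 0.
  move=> c c0; case: (pickP (fun j => c ord0 j != 0)) => [j Hj|N]; first by exists j.
  move/negP: c0; case; apply/eqP/rowP => j; rewrite mxE.
  by have := N j => /negbFE /eqP.
have hdpos : (0 < d)%N <-> exists i, (l i <= m i - 1)%N.
  rewrite hd; split.
  - move=> H; case: (pickP (fun i => l i < m i)%N) => [i Hi|N].
      by exists i; move: Hi => /=; lia.
    move: H; rewrite big1 // => i _.
    have /negbT h := N i; rewrite -leqNgt in h.
    by rewrite (_ : (m i - l i = 0)%N) ?mul0n //; lia.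
  - case=> i Hi; rewrite (bigD1 i) //= addn_gt0 muln_gt0.
    have h1 := hm i; have h2 := hfs i.
    apply/orP; left; apply/andP; split.
 - move: Hi h1; clear; lia.
 - by move: h2; case: (size (f i)) => [|[|k]].
have hC : forall c, C c <-> exists P, c = pv (lift_mx L M) (lift_mx L v) (g * P).
  move=> c; split => -[P HP]; exists P; first by rewrite pvM.
  by rewrite -pvM.
have hCZ : forall (x : L) c, C c -> C (x *: c).
  move=> x c /hC [P ->]; apply/hC; exists (x *: P).
  by rewrite -scalerAr pvZ.
have rw_pos : forall c : 'rV[L]_n.+1, c != 0 -> (0 < rank_weight c)%N.
  move=> c c0; have [j cj] := row_nz c c0.
  rewrite /rank_weight lt0n dimv_eq0; apply/negP => /eqP V0.
  have : c ord0 j \in << [seq c ord0 j | j <- enum 'I_n.+1] >>%VS.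
    by apply: memv_span; apply: map_f; rewrite mem_enum.
  by rewrite V0 memv0 (negbTE cj).
split => [[[c [Cc c0 rc]] _] | Hex].
- apply/hdpos.
  have [j cj] := row_nz c c0.
  set x := c ord0 j.
  set V := << [seq c ord0 k | k <- enum 'I_n.+1] >>%VS.
  have inV : forall k, c ord0 k \in V.
    by move=> k; apply: memv_span; apply: map_f; rewrite mem_enum.
  have VE : V = <[x]>%VS.
    apply/eqP; rewrite eq_sym eqEdim -memvE inV /= dim_vline cj.
    by move: rc; rewrite /rank_weight -/V => ->.
  pose w : 'rV[K]_n.+1 := \row_k coord [tuple x] ord0 (c ord0 k).
  have Ec : c = x *: lift_mx L w.
    apply/rowP => k; rewrite !mxE.
    have : c ord0 k \in <<[tuple x]>>%VS by rewrite span_seq1 -VE inV.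
    move/coord_span => {1}->; rewrite big_ord1 /=.
    by rewrite mulr_algr.
  have Cw : C (lift_mx L w).
    have -> : lift_mx L w = x^-1 *: c by rewrite Ec scalerA mulVf // scale1r.
    exact: hCZ.
  have [Q hQ wQ] := (Hs w).1 Cw.
  rewrite lt0n; apply/negP => /eqP d0.
  move: hQ; rewrite d0 => /size_poly_leq0P Q0.
  move/negP: c0; apply; apply/eqP.
  by rewrite Ec wQ Q0 phi0 /lift_mx map_mx0 scaler0.
- split.
  + have d0 := hdpos.2 Hex.
    have hw0 : phi 1 != 0.
      apply/negP => /eqP H.
      have E : (1 : {poly K}) = 0 by apply: Hinj; rewrite ?size_poly1 ?size_poly0 ?H ?phi0.
      by have := oner_neq0 {poly K}; rewrite E eqxx.
    have hc0 : lift_mx L (phi 1) != 0.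
      by apply/negP => /eqP /lift_inj /eqP; apply/negP.
    exists (lift_mx L (phi 1)); split => //.
      by apply/Hs; exists 1; rewrite ?size_poly1.
    apply/eqP; rewrite eqn_leq rw_pos // andbT.
    apply: leq_trans (dimvS (_ : (_ <= <[1]>)%VS)) _.
      apply/span_subvP => y /mapP [k _ ->]; rewrite /lift_mx mxE.
      by apply/vlineP; exists (phi 1 ord0 k).
    by rewrite dim_vline oner_neq0.
  + by move=> c _ c0; exact: rw_pos.
Qed.
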